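(* Let $E=\mathbb{Q}(i,\sqrt5)$, let $\tau=(1+\sqrt5)/2$, and let $\sigma$ be the automorphism of $E$ with $\sigma(i)=i$ and $\sigma(\sqrt5)=-\sqrt5$. For a real number $N\ge 1$ let $\mathbf{L}(N)$ be the set of numbers $x=(a+bi)+(c+di)\tau\in E$ with $a,b,c,d\in\mathbb{Z}$ and $|a|,|b|,|c|,|d|\le N$. For $x_1,x_2\in E$ put $$X(x_1,x_2)=\begin{pmatrix} x_1 & \sigma(x_1)\\ i\,x_2 & \sigma(x_2)\end{pmatrix},\qquad D(N,N)=\min_{x_1,x_2\in\mathbf{L}(N)\setminus\{0\}}\left|\det X(x_1,x_2)\right|.$$ Then $$\limsup_{N\to\infty}\left(-\frac{\log D(N,N)}{\log N}\right)=2.$$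
   Context: This is the two-user single-antenna Badr–Belfiore multiuser MIMO code; $\det X(x_1,x_2)\neq0$ whenever $x_1,x_2\neq0$, so $D(N,N)>0$. *)

(* Defs.v *)
From Stdlib Require Import Reals ZArith.
From Coquelicot Require Import Coquelicot.
Open Scope R_scope.

Definition tau : C := RtoC ((1 + sqrt 5) / 2).
Definition tau_conj : C := RtoC ((1 - sqrt 5) / 2).

Definition elt (a b c d : Z) : C :=
  Cplus (Cplus (RtoC (IZR a)) (Cmult Ci (RtoC (IZR b))))
        (Cmult (Cplus (RtoC (IZR c)) (Cmult Ci (RtoC (IZR d)))) tau).

(* its image under sigma (sigma(i) = i, sigma(sqrt 5) = - sqrt 5), using that
   1, i, tau, i tau is a Q-basis of E *)
Definition sigma_elt (a b c d : Z) : C :=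
  Cplus (Cplus (RtoC (IZR a)) (Cmult Ci (RtoC (IZR b))))
        (Cmult (Cplus (RtoC (IZR c)) (Cmult Ci (RtoC (IZR d)))) tau_conj).

Definition detX (x1 sx1 x2 sx2 : C) : C :=
  Cminus (Cmult x1 sx2) (Cmult (Cmult Ci x2) sx1).

Definition inbox (N : R) (a b c d : Z) : Prop :=
  Rabs (IZR a) <= N /\ Rabs (IZR b) <= N /\ Rabs (IZR c) <= N /\ Rabs (IZR d) <= N.

Definition Dset (N : R) (r : R) : Prop :=
  exists a1 b1 c1 d1 a2 b2 c2 d2 : Z,
    inbox N a1 b1 c1 d1 /\ inbox N a2 b2 c2 d2 /\
    elt a1 b1 c1 d1 <> RtoC 0 /\ elt a2 b2 c2 d2 <> RtoC 0 /\
    r = Cmod (detX (elt a1 b1 c1 d1) (sigma_elt a1 b1 c1 d1)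
                   (elt a2 b2 c2 d2) (sigma_elt a2 b2 c2 d2)).

(* D(N,N): the minimum of the (finite, nonempty) set Dset N, taken as its infimum *)
Definition DNN (N : R) : R := real (Glb_Rbar (Dset N)).

Definition sup_from (f : R -> R) (M : R) : Rbar :=
  Rbar_lub (fun y => exists N, M <= N /\ y = Finite (f N)).
Definition limsup_infty (f : R -> R) : Rbar :=
  Rbar_glb (fun z => exists M, z = sup_from f M).

(* Main.v *)
Require Import Defs.
From Stdlib Require Import Reals Lra Lia Nsatz ZArith.
From Coquelicot Require Import Coquelicot.
Open Scope R_scope.

Definition t := (1 + sqrt 5) / 2.
Definition t' := (1 - sqrt 5) / 2.

Lemma s5sq : sqrt 5 * sqrt 5 = 5.
Proof. apply sqrt_sqrt; lra. Qed.
Lemma s5_bounds : 2 < sqrt 5 < 3.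
Proof.
  split.
  - rewrite <- (sqrt_square 2) by lra. apply sqrt_lt_1; lra.
  - rewrite <- (sqrt_square 3) by lra. apply sqrt_lt_1; lra.
Qed.
Lemma t_sq : t * t = t + 1.
Proof. unfold t. pose proof s5sq. nra. Qed.
Lemma t'_sq : t' * t' = t' + 1.
Proof. unfold t'. pose proof s5sq. nra. Qed.
Lemma t_sum : t + t' = 1.
Proof. unfold t, t'. lra. Qed.
Lemma t_prod : t * t' = -1.
Proof. unfold t, t'. pose proof s5sq. nra. Qed.
Lemma t_bounds : 3/2 < t < 2.
Proof. unfold t. pose proof s5_bounds. lra. Qed.
Lemma t'_bounds : -1 < t' < -1/2.
Proof. unfold t'. pose proof s5_bounds. lra. Qed.
Lemma t_diff : t - t' = sqrt 5.
Proof. unfold t, t'. lra. Qed.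

Lemma sq5_int_aux : forall k : nat, forall p q : Z, (Z.abs q < Z.of_nat k)%Z -> (p*p = 5*(q*q))%Z -> q = 0%Z.
Proof.
  induction k; intros p q Hk H.
  - lia.
  - destruct (Z.eq_dec q 0) as [|Hq]; [assumption|exfalso].
    assert (Hp: (p mod 5 = 0)%Z).
    { assert (Hr := Z.mod_pos_bound p 5 ltac:(lia)).
      assert (Hd := Z.div_mod p 5 ltac:(lia)).
      set (r := (p mod 5)%Z) in *. set (a := (p / 5)%Z) in *.
      assert (Hrr : (r*r - 5*(q*q - 5*a*a - 2*a*r) = 0)%Z) by (rewrite Hd in H; nia).
      assert (r = 0 \/ r = 1 \/ r = 2 \/ r = 3 \/ r = 4)%Z as HH by lia.
      destruct HH as [E|[E|[E|[E|E]]]]; rewrite E in Hrr; try lia. }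
    assert (Hd := Z.div_mod p 5 ltac:(lia)). rewrite Hp, Z.add_0_r in Hd.
    set (a := (p / 5)%Z) in *.
    assert (Hq2 : (q*q = 5*(a*a))%Z) by (rewrite Hd in H; nia).
    assert (Hq5 : (q mod 5 = 0)%Z).
    { assert (Hr := Z.mod_pos_bound q 5 ltac:(lia)).
      assert (Hd' := Z.div_mod q 5 ltac:(lia)).
      set (r := (q mod 5)%Z) in *. set (b := (q / 5)%Z) in *.
      assert (Hrr : (r*r - 5*(a*a - 5*b*b - 2*b*r) = 0)%Z) by (rewrite Hd' in Hq2; nia).
      assert (r = 0 \/ r = 1 \/ r = 2 \/ r = 3 \/ r = 4)%Z as HH by lia.
      destruct HH as [E|[E|[E|[E|E]]]]; rewrite E in Hrr; try lia. }
    assert (Hd' := Z.div_mod q 5 ltac:(lia)). rewrite Hq5, Z.add_0_r in Hd'.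
    set (b := (q / 5)%Z) in *.
    assert (Hab : (a*a = 5*(b*b))%Z) by (rewrite Hd' in Hq2; nia).
    assert (b = 0%Z) by (apply (IHk a b); [lia| exact Hab]).
    lia.
Qed.

Lemma sq5_int : forall p q : Z, (p*p = 5*(q*q))%Z -> q = 0%Z.
Proof. intros p q H. apply (sq5_int_aux (S (Z.to_nat (Z.abs q))) p q); [lia|exact H]. Qed.

Record Q4 := mk4 { qa : Z; qb : Z; qc : Z; qd : Z }.

Definition mul4 (x y : Q4) : Q4 :=
  let (a, b, c, d) := x in let (a', b', c', d') := y in
  let ABr := (a*a' - b*b')%Z in let ABi := (a*b' + b*a')%Z in
  let CDr := (c*c' - d*d')%Z in let CDi := (c*d' + d*c')%Z in
  let ADr := (a*c' - b*d')%Z in let ADi := (a*d' + b*c')%Z in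
  let CBr := (c*a' - d*b')%Z in let CBi := (c*b' + d*a')%Z in
  mk4 (ABr + CDr) (ABi + CDi) (ADr + CBr + CDr) (ADi + CBi + CDi).
Definition sig4 (x : Q4) : Q4 := let (a,b,c,d) := x in mk4 (a+c) (b+d) (-c) (-d).
Definition imul4 (x : Q4) : Q4 := let (a,b,c,d) := x in mk4 (-b) a (-d) c.
Definition sub4 (x y : Q4) : Q4 :=
  let (a,b,c,d) := x in let (a',b',c',d') := y in mk4 (a-a') (b-b') (c-c') (d-d').
Definition ev4 (x : Q4) : C := let (a,b,c,d) := x in (IZR a + IZR c * t, IZR b + IZR d * t).

Lemma ev4_mul x y : ev4 (mul4 x y) = Cmult (ev4 x) (ev4 y).
Proof.
  destruct x as [a b c d], y as [a' b' c' d']. unfold mul4, ev4, Cmult; simpl.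
  pose proof t_sq.
  f_equal; repeat rewrite ?plus_IZR, ?minus_IZR, ?mult_IZR, ?opp_IZR; nsatz.
Qed.
Lemma ev4_sub x y : ev4 (sub4 x y) = Cminus (ev4 x) (ev4 y).
Proof.
  destruct x as [a b c d], y as [a' b' c' d']. unfold sub4, ev4, Cminus, Cplus, Copp; simpl.
  f_equal; repeat rewrite ?plus_IZR, ?minus_IZR, ?mult_IZR, ?opp_IZR; ring.
Qed.
Lemma ev4_imul x : ev4 (imul4 x) = Cmult Ci (ev4 x).
Proof.
  destruct x as [a b c d]. unfold imul4, ev4, Cmult, Ci; simpl.
  f_equal; repeat rewrite ?plus_IZR, ?minus_IZR, ?mult_IZR, ?opp_IZR; ring.
Qed.
Lemma elt_ev a b c d : elt a b c d = ev4 (mk4 a b c d).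
Proof.
  unfold elt, ev4, tau, Cplus, Cmult, Ci, RtoC; simpl. fold t.
  f_equal; ring.
Qed.
Lemma sigma_elt_ev a b c d : sigma_elt a b c d = ev4 (sig4 (mk4 a b c d)).
Proof.
  unfold sigma_elt, ev4, sig4, tau_conj, Cplus, Cmult, Ci, RtoC; simpl. fold t'.
  pose proof t_sum.
  f_equal; repeat rewrite ?plus_IZR, ?minus_IZR, ?mult_IZR, ?opp_IZR; replace t' with (1 - t) by lra; ring.
Qed.

Definition det4 (x1 x2 : Q4) : Q4 :=
  sub4 (mul4 x1 (sig4 x2)) (imul4 (mul4 x2 (sig4 x1))).

Lemma detX_ev a1 b1 c1 d1 a2 b2 c2 d2 :
  detX (elt a1 b1 c1 d1) (sigma_elt a1 b1 c1 d1) (elt a2 b2 c2 d2) (sigma_elt a2 b2 c2 d2)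
  = ev4 (det4 (mk4 a1 b1 c1 d1) (mk4 a2 b2 c2 d2)).
Proof.
  rewrite !elt_ev, !sigma_elt_ev. unfold det4, detX.
  rewrite ev4_sub, ev4_imul, !ev4_mul. rewrite Cmult_assoc. reflexivity.
Qed.

Definition Kr (u : Q4) : Z := let (ur,ui,vr,vi) := u in
  (2*(ur*ur - ui*ui) + 2*(ur*vr - ui*vi) + 3*(vr*vr - vi*vi))%Z.
Definition Ki (u : Q4) : Z := let (ur,ui,vr,vi) := u in
  (4*ur*ui + 2*(ur*vi + ui*vr) + 6*vr*vi)%Z.

Lemma det_u x1 x2 : det4 x1 x2 = sub4 (mul4 x1 (sig4 x2)) (imul4 (sig4 (mul4 x1 (sig4 x2)))).
Proof.
  destruct x1 as [a b c d], x2 as [a' b' c' d'].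
  unfold det4, mul4, sig4, sub4, imul4. f_equal; ring.
Qed.

Lemma norm_u u : mul4 (sub4 u (imul4 (sig4 u))) (sig4 (sub4 u (imul4 (sig4 u)))) = mk4 (Ki u) (- Kr u) 0 0.
Proof.
  destruct u as [a b c d]. unfold mul4, sig4, sub4, imul4, Ki, Kr. f_equal; ring.
Qed.

Lemma det_norm_id x1 x2 :
  mul4 (det4 x1 x2) (sig4 (det4 x1 x2)) =
  mk4 (Ki (mul4 x1 (sig4 x2))) (- Kr (mul4 x1 (sig4 x2))) 0 0.
Proof. rewrite det_u. apply norm_u. Qed.

Lemma sig_det x1 x2 : sig4 (det4 x1 x2) = sub4 (mul4 (sig4 x1) x2) (imul4 (mul4 (sig4 x2) x1)).
Proof.
  destruct x1 as [a b c d], x2 as [a' b' c' d'].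
  unfold det4, mul4, sig4, sub4, imul4. f_equal; ring.
Qed.

Lemma sq_eq_nonneg (A B : Z) : (0 <= A)%Z -> (0 <= B)%Z -> (A*A = B*B)%Z -> A = B.
Proof.
  intros HA HB H. assert (E : ((A - B)*(A + B) = 0)%Z) by (rewrite Z.mul_sub_distr_r, !Z.mul_add_distr_l; lia).
  apply Z.mul_eq_0 in E. lia.
Qed.

Lemma K_zero u : Kr u = 0%Z -> Ki u = 0%Z -> u = mk4 0 0 0 0.
Proof.
  destruct u as [ur ui vr vi]. unfold Kr, Ki. intros H1 H2.
  set (x1 := (2*ur + vr)%Z). set (x2 := (2*ui+vi)%Z).
  assert (E1 : (x1*x1 - x2*x2 = 2*(2*(ur*ur - ui*ui) + 2*(ur*vr - ui*vi) + 3*(vr*vr - vi*vi)) + 5*(vi*vi - vr*vr))%Z) by (unfold x1, x2; ring).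
  rewrite H1 in E1.
  assert (E2 : (2*(x1*x2) = (4*ur*ui + 2*(ur*vi + ui*vr) + 6*vr*vi) + (4*ur*ui + 2*(ur*vi + ui*vr) + 6*vr*vi) - 10*(vr*vi))%Z) by (unfold x1, x2; ring).
  rewrite H2 in E2.
  assert (E3 : ((x1*x1 + x2*x2)*(x1*x1+x2*x2) = (x1*x1 - x2*x2)*(x1*x1 - x2*x2) + (2*(x1*x2))*(2*(x1*x2)))%Z) by ring.
  rewrite E1, E2 in E3.
  assert (E3' : ((x1*x1 + x2*x2)*(x1*x1+x2*x2) = (5*(vr*vr+vi*vi))*(5*(vr*vr+vi*vi)))%Z) by (rewrite E3; ring).
  assert (E4 : (x1*x1 + x2*x2 = 5*(vr*vr+vi*vi))%Z).
  { apply sq_eq_nonneg; [ | | exact E3'].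
    - pose proof (Z.square_nonneg x1); pose proof (Z.square_nonneg x2); lia.
    - pose proof (Z.square_nonneg vr); pose proof (Z.square_nonneg vi); lia. }
  assert (F1 : (x1*x1 = 5*(vi*vi))%Z) by lia.
  assert (F2 : (x2*x2 = 5*(vr*vr))%Z) by lia.
  assert (vi = 0%Z) by (apply (sq5_int x1); exact F1).
  assert (vr = 0%Z) by (apply (sq5_int x2); exact F2). subst vi vr.
  rewrite Z.mul_0_l, Z.mul_0_r in F1, F2.
  apply Z.mul_eq_0 in F1. apply Z.mul_eq_0 in F2.
  unfold x1, x2 in *. f_equal; lia.
Qed.


Lemma irr_t' (a c : Z) : IZR a + IZR c * t' = 0 -> a = 0%Z /\ c = 0%Z.
Proof.
  intro H. pose proof s5sq.
  assert (H1 : IZR c * sqrt 5 = IZR (2*a + c)) by (unfold t' in H; rewrite plus_IZR, mult_IZR; lra).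
  assert (E : IZR ((2*a+c)*(2*a+c)) = IZR (5*(c*c))).
  { rewrite mult_IZR, <- H1, mult_IZR, mult_IZR. nra. }
  apply eq_IZR in E. apply sq5_int in E. subst c. split; [|reflexivity].
  rewrite Rmult_0_l, Rplus_0_r in H. apply eq_IZR in H. exact H.
Qed.

Lemma ev4_sig_zero x : ev4 (sig4 x) = RtoC 0 -> ev4 x = RtoC 0.
Proof.
  destruct x as [a b c d]. unfold ev4, sig4, RtoC. intro H. injection H as H1 H2.
  pose proof t_sum.
  assert (IZR a + IZR c * t' = 0) by (rewrite plus_IZR, opp_IZR in H1; replace t' with (1-t) by lra; lra).
  assert (IZR b + IZR d * t' = 0) by (rewrite plus_IZR, opp_IZR in H2; replace t' with (1-t) by lra; lra).
  destruct (irr_t' a c H0), (irr_t' b d H3). subst. f_equal; simpl; lra.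
Qed.

Lemma Cmod_le_abs (x y : R) : Cmod (x, y) <= Rabs x + Rabs y.
Proof.
  unfold Cmod; simpl. rewrite <- (sqrt_square (Rabs x + Rabs y)).
  2: { pose proof (Rabs_pos x); pose proof (Rabs_pos y); lra. }
  apply sqrt_le_1_alt.
  pose proof (Rabs_pos x); pose proof (Rabs_pos y).
  simpl. rewrite !Rmult_1_r.
  assert (x*x = Rabs x * Rabs x) by (rewrite <- Rabs_mult; rewrite Rabs_right; nra).
  assert (y*y = Rabs y * Rabs y) by (rewrite <- Rabs_mult; rewrite Rabs_right; nra).
  nra.
Qed.

Lemma IZR_abs_le N (a : Z) : Rabs (IZR a) <= N -> Rabs (IZR a) <= N. Proof. auto. Qed.

Lemma ev4_bound N a b c d : inbox N a b c d -> Cmod (ev4 (mk4 a b c d)) <= 6 * N.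
Proof.
  unfold inbox. intros [Ha [Hb [Hc Hd]]]. unfold ev4.
  eapply Rle_trans; [apply Cmod_le_abs|]. pose proof t_bounds.
  pose proof (Rabs_triang (IZR a) (IZR c * t)). pose proof (Rabs_triang (IZR b) (IZR d * t)).
  rewrite Rabs_mult in H0, H1. rewrite (Rabs_right t) in H0, H1 by lra.
  pose proof (Rabs_pos (IZR c)). pose proof (Rabs_pos (IZR d)). nra.
Qed.

Lemma ev4s_bound N a b c d : inbox N a b c d -> Cmod (ev4 (sig4 (mk4 a b c d))) <= 4 * N.
Proof.
  unfold inbox. intros [Ha [Hb [Hc Hd]]]. unfold ev4, sig4.
  eapply Rle_trans; [apply Cmod_le_abs|]. pose proof t_bounds. pose proof t_sum. pose proof t'_bounds.
  rewrite !plus_IZR, !opp_IZR.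
  replace (IZR a + IZR c + - IZR c * t) with (IZR a + IZR c * t') by (replace t' with (1-t) by lra; ring).
  replace (IZR b + IZR d + - IZR d * t) with (IZR b + IZR d * t') by (replace t' with (1-t) by lra; ring).
  pose proof (Rabs_triang (IZR a) (IZR c * t')). pose proof (Rabs_triang (IZR b) (IZR d * t')).
  rewrite Rabs_mult in H2, H3. rewrite (Rabs_left t') in H2, H3 by lra.
  pose proof (Rabs_pos (IZR c)). pose proof (Rabs_pos (IZR d)). nra.
Qed.

Lemma lower_bound N r : 0 < N -> Dset N r -> / (48 * (N * N)) <= r.
Proof.
  intros HN [a1 [b1 [c1 [d1 [a2 [b2 [c2 [d2 [I1 [I2 [Z1 [Z2 Hr]]]]]]]]]]]].
  rewrite detX_ev in Hr. rewrite elt_ev in Z1, Z2.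
  set (x1 := mk4 a1 b1 c1 d1) in *. set (x2 := mk4 a2 b2 c2 d2) in *.
  set (dd := det4 x1 x2) in *.
  assert (Hid := det_norm_id x1 x2). fold dd in Hid.
  assert (Hprod : Cmod (ev4 dd) * Cmod (ev4 (sig4 dd)) = Cmod (ev4 (mk4 (Ki (mul4 x1 (sig4 x2))) (- Kr (mul4 x1 (sig4 x2))) 0 0))).
  { rewrite <- Hid, ev4_mul, Cmod_mult. reflexivity. }
  assert (HK : 1 <= Cmod (ev4 (mk4 (Ki (mul4 x1 (sig4 x2))) (- Kr (mul4 x1 (sig4 x2))) 0 0))).
  { set (u := mul4 x1 (sig4 x2)).
    assert (Hnz : Kr u <> 0%Z \/ Ki u <> 0%Z).
    { destruct (Z.eq_dec (Kr u) 0) as [E1|E1]; destruct (Z.eq_dec (Ki u) 0) as [E2|E2]; auto.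
      exfalso. assert (Hu := K_zero u E1 E2).
      assert (Hev : Cmult (ev4 x1) (ev4 (sig4 x2)) = RtoC 0).
      { rewrite <- ev4_mul. fold u. rewrite Hu. unfold ev4, RtoC. f_equal; simpl; ring. }
      refine (Cmult_neq_0 _ _ Z1 _ Hev).
      intro Hz. apply ev4_sig_zero in Hz. exact (Z2 Hz). }
    set (kr := Kr u) in *. set (ki := Ki u) in *.
    assert (Hsq : 1 <= IZR ki ^ 2 + IZR (- kr) ^ 2).
    { rewrite opp_IZR. destruct Hnz as [H|H].
      - assert (1 <= IZR kr * IZR kr) by (rewrite <- mult_IZR; apply IZR_le; nia). nra.
      - assert (1 <= IZR ki * IZR ki) by (rewrite <- mult_IZR; apply IZR_le; nia). nra. }
    unfold ev4, Cmod. cbn [fst snd]. rewrite <- sqrt_1. apply sqrt_le_1_alt.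
    rewrite !Rmult_0_l, !Rplus_0_r. exact Hsq. }
  assert (Hs : Cmod (ev4 (sig4 dd)) <= 48 * (N * N)).
  { unfold dd. rewrite sig_det, ev4_sub, ev4_imul, !ev4_mul.
    unfold Cminus. eapply Rle_trans; [apply Cmod_triangle|].
    rewrite Cmod_opp, !Cmod_mult, Cmod_Ci.
    pose proof (ev4_bound N _ _ _ _ I1). pose proof (ev4_bound N _ _ _ _ I2).
    pose proof (ev4s_bound N _ _ _ _ I1). pose proof (ev4s_bound N _ _ _ _ I2).
    fold x1 x2 in H, H0, H1, H2.
    pose proof (Cmod_ge_0 (ev4 x1)). pose proof (Cmod_ge_0 (ev4 x2)).
    pose proof (Cmod_ge_0 (ev4 (sig4 x1))). pose proof (Cmod_ge_0 (ev4 (sig4 x2))).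
    assert (Cmod (ev4 (sig4 x1)) * Cmod (ev4 x2) <= 4*N*(6*N)) by (apply Rmult_le_compat; lra).
    assert (Cmod (ev4 (sig4 x2)) * Cmod (ev4 x1) <= 4*N*(6*N)) by (apply Rmult_le_compat; lra).
    nra. }
  rewrite Hr.
  pose proof (Cmod_ge_0 (ev4 dd)). pose proof (Cmod_ge_0 (ev4 (sig4 dd))).
  assert (HNN : 0 < 48 * (N*N)) by nra.
  apply (Rmult_le_reg_r (48 * (N*N))); [exact HNN|].
  rewrite Rinv_l by lra.
  assert (Cmod (ev4 dd) * Cmod (ev4 (sig4 dd)) <= Cmod (ev4 dd) * (48 * (N*N))) by (apply Rmult_le_compat_l; lra).
  lra.
Qed.

Record Q2 := mk2 { pa : Z; pc : Z }.
Definition mul2 (x y : Q2) : Q2 :=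
  let (a, c) := x in let (b, d) := y in mk2 (a*b + c*d) (a*d + c*b + c*d).
Definition add2 (x y : Q2) : Q2 := let (a, c) := x in let (b, d) := y in mk2 (a+b) (c+d).
Definition neg2 (x : Q2) : Q2 := let (a, c) := x in mk2 (-a) (-c).
Definition sig2 (x : Q2) : Q2 := let (a, c) := x in mk2 (a+c) (-c).
Definition one2 := mk2 1 0.
Definition tau2 := mk2 0 1.
Definition taup2 := mk2 1 (-1).
Fixpoint qpow (x : Q2) (n : nat) : Q2 := match n with O => one2 | S k => mul2 x (qpow x k) end.
Definition ev2 (x : Q2) : R := IZR (pa x) + IZR (pc x) * t.
Definition evs2 (x : Q2) : R := IZR (pa x) + IZR (pc x) * t'.

Lemma ev2_mul x y : ev2 (mul2 x y) = ev2 x * ev2 y.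
Proof. destruct x as [a c], y as [b d]. unfold ev2, mul2; simpl. pose proof t_sq.
  repeat rewrite ?plus_IZR, ?mult_IZR. nsatz. Qed.
Lemma evs2_mul x y : evs2 (mul2 x y) = evs2 x * evs2 y.
Proof. destruct x as [a c], y as [b d]. unfold evs2, mul2; simpl. pose proof t'_sq.
  repeat rewrite ?plus_IZR, ?mult_IZR. nsatz. Qed.
Lemma ev2_add x y : ev2 (add2 x y) = ev2 x + ev2 y.
Proof. destruct x as [a c], y as [b d]. unfold ev2, add2; simpl. rewrite !plus_IZR. ring. Qed.
Lemma evs2_add x y : evs2 (add2 x y) = evs2 x + evs2 y.
Proof. destruct x as [a c], y as [b d]. unfold evs2, add2; simpl. rewrite !plus_IZR. ring. Qed.
Lemma ev2_neg x : ev2 (neg2 x) = - ev2 x.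
Proof. destruct x as [a c]. unfold ev2, neg2; simpl. rewrite !opp_IZR. ring. Qed.
Lemma evs2_neg x : evs2 (neg2 x) = - evs2 x.
Proof. destruct x as [a c]. unfold evs2, neg2; simpl. rewrite !opp_IZR. ring. Qed.
Lemma ev2_sig x : ev2 (sig2 x) = evs2 x.
Proof. destruct x as [a c]. unfold ev2, evs2, sig2; simpl. rewrite plus_IZR, opp_IZR.
  pose proof t_sum. replace t' with (1 - t) by lra. ring. Qed.
Lemma evs2_sig x : evs2 (sig2 x) = ev2 x.
Proof. destruct x as [a c]. unfold ev2, evs2, sig2; simpl. rewrite plus_IZR, opp_IZR.
  pose proof t_sum. replace t' with (1 - t) by lra. ring. Qed.
Lemma ev2_one : ev2 one2 = 1. Proof. unfold ev2, one2; simpl. ring. Qed.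
Lemma evs2_one : evs2 one2 = 1. Proof. unfold evs2, one2; simpl. ring. Qed.
Lemma ev2_tau : ev2 tau2 = t. Proof. unfold ev2, tau2; simpl. ring. Qed.
Lemma evs2_tau : evs2 tau2 = t'. Proof. unfold evs2, tau2; simpl. ring. Qed.
Lemma ev2_taup : ev2 taup2 = t'. Proof. unfold ev2, taup2; simpl. pose proof t_sum. lra. Qed.
Lemma evs2_taup : evs2 taup2 = t. Proof. unfold evs2, taup2; simpl. pose proof t_sum. lra. Qed.
Lemma ev2_qpow x n : ev2 (qpow x n) = ev2 x ^ n.
Proof. induction n; simpl; [apply ev2_one|]. rewrite ev2_mul, IHn. ring. Qed.
Lemma evs2_qpow x n : evs2 (qpow x n) = evs2 x ^ n.
Proof. induction n; simpl; [apply evs2_one|]. rewrite evs2_mul, IHn. ring. Qed.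

Lemma coords_bound x : Rabs (IZR (pa x)) <= 2 * (Rabs (ev2 x) + Rabs (evs2 x))
                    /\ Rabs (IZR (pc x)) <= 2 * (Rabs (ev2 x) + Rabs (evs2 x)).
Proof.
  destruct x as [a c]. unfold ev2, evs2; simpl.
  pose proof t_diff. pose proof s5_bounds. pose proof t_bounds.
  assert (Hc : IZR c * sqrt 5 = (IZR a + IZR c * t) - (IZR a + IZR c * t')) by (rewrite <- H; ring).
  set (u := IZR a + IZR c * t) in *. set (v := IZR a + IZR c * t') in *.
  assert (Hc' : Rabs (IZR c) * sqrt 5 <= Rabs u + Rabs v).
  { rewrite <- (Rabs_right (sqrt 5)) by lra. rewrite <- Rabs_mult, Hc.
    unfold Rminus. eapply Rle_trans; [apply Rabs_triang|]. rewrite Rabs_Ropp. lra. }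
  pose proof (Rabs_pos (IZR c)). pose proof (Rabs_pos u). pose proof (Rabs_pos v).
  assert (Hc2 : Rabs (IZR c) <= (Rabs u + Rabs v) / 2) by nra.
  split; [|nra].
  assert (IZR a = u - IZR c * t) by (unfold u; ring). rewrite H5.
  unfold Rminus. eapply Rle_trans; [apply Rabs_triang|]. rewrite Rabs_Ropp, Rabs_mult, (Rabs_right t) by lra.
  nra.
Qed.

Fixpoint ej (j : nat) : nat := match j with O => O | S k => (5 * ej k + 1)%nat end.

Fixpoint GH (j : nat) : Q2 * Q2 :=
  match j with
  | O => (one2, mk2 (-1) 1)
  | S k => let Y := qpow tau2 (4 * ej k + 1) in
      (mul2 (fst (GH k)) (add2 (add2 (mul2 Y Y) (mul2 tau2 Y)) one2),
       mul2 (snd (GH k)) (add2 (add2 (mul2 Y Y) (mul2 taup2 Y)) one2))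
  end.

Lemma pow_abs_le1 (x : R) n : Rabs x <= 1 -> Rabs (x ^ n) <= 1.
Proof.
  intro H. rewrite <- RPow_abs. induction n; simpl; [lra|].
  pose proof (Rabs_pos x). assert (0 <= Rabs x ^ n) by (apply pow_le; lra). nra.
Qed.

Definition Yj j := qpow tau2 (4 * ej j + 1).
Lemma GH_S1 j : fst (GH (S j)) = mul2 (fst (GH j)) (add2 (add2 (mul2 (Yj j) (Yj j)) (mul2 tau2 (Yj j))) one2).
Proof. reflexivity. Qed.
Lemma GH_S2 j : snd (GH (S j)) = mul2 (snd (GH j)) (add2 (add2 (mul2 (Yj j) (Yj j)) (mul2 taup2 (Yj j))) one2).
Proof. reflexivity. Qed.
Lemma ej_S j : ej (S j) = (5 * ej j + 1)%nat.
Proof. reflexivity. Qed.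

Lemma fact5a y : (y - 1) * ((y * y + t * y + 1) * (y * y + t' * y + 1)) = y*y*y*y*y - 1.
Proof. pose proof t_sum. pose proof t_prod. nsatz. Qed.
Lemma fact5b y : (y - 1) * ((y * y + t' * y + 1) * (y * y + t * y + 1)) = y*y*y*y*y - 1.
Proof. pose proof t_sum. pose proof t_prod. nsatz. Qed.

Lemma GH_inv j :
  ev2 (fst (GH j)) * ev2 (snd (GH j)) = t ^ (4*ej j+1) - 1 /\
  evs2 (fst (GH j)) * evs2 (snd (GH j)) = t' ^ (4*ej j+1) - 1 /\
  0 < ev2 (fst (GH j)) <= 4 ^ j * t ^ (2*ej j) /\
  0 < ev2 (snd (GH j)) <= 4 ^ j * t ^ (2*ej j) /\
  0 < evs2 (fst (GH j)) <= 4 ^ j /\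
  Rabs (evs2 (snd (GH j))) <= 2 * 4 ^ j.
Proof.
  pose proof t_bounds as Tb. pose proof t'_bounds as T'b. pose proof t_sum as Ts. pose proof t_prod as Tp.
  induction j.
  - simpl. unfold ev2, evs2, one2; simpl. repeat split; try lra.
    rewrite Rabs_left by lra. lra.
  - destruct IHj as [I1 [I2 [[I3 I3'] [[I4 I4'] [[I5 I5'] I6]]]]].
    rewrite GH_S1, GH_S2, ej_S. cbn [pow].
    rewrite !ev2_mul, !evs2_mul, !ev2_add, !evs2_add, !ev2_mul, !evs2_mul.
    unfold Yj. rewrite ev2_qpow, evs2_qpow,
      ev2_tau, evs2_tau, ev2_taup, evs2_taup, ev2_one, evs2_one.
    set (e := ej j) in *. set (G := fst (GH j)) in *. set (H := snd (GH j)) in *.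
    rewrite ?ev2_mul, ?evs2_mul, ?ev2_add, ?evs2_add, ?ev2_mul, ?evs2_mul, ?ev2_qpow, ?evs2_qpow,
      ?ev2_tau, ?evs2_tau, ?ev2_taup, ?evs2_taup, ?ev2_one, ?evs2_one.
    set (y := t ^ (4*e+1)). set (y' := t' ^ (4*e+1)).
    assert (Hy : t <= y).
    { unfold y. rewrite pow_add, pow_1. rewrite Rmult_comm. rewrite <- (Rmult_1_r t) at 1.
      apply Rmult_le_compat_l; [lra|]. apply pow_R1_Rle. lra. }
    assert (Hy' : Rabs y' <= 1) by (apply pow_abs_le1; rewrite Rabs_left; lra).
    assert (Hexp1 : t ^ (4 * (5*e+1) + 1) = y*y*y*y*y).
    { unfold y. replace (4 * (5*e+1) + 1)%nat with ((4*e+1)+(4*e+1)+(4*e+1)+(4*e+1)+(4*e+1))%nat by lia.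
      rewrite !pow_add. ring. }
    assert (Hexp2 : t' ^ (4 * (5*e+1) + 1) = y'*y'*y'*y'*y').
    { unfold y'. replace (4 * (5*e+1) + 1)%nat with ((4*e+1)+(4*e+1)+(4*e+1)+(4*e+1)+(4*e+1))%nat by lia.
      rewrite !pow_add. ring. }
    assert (Hexp3 : t ^ (2 * (5*e+1)) = t ^ (2*e) * (y*y)).
    { unfold y. replace (2 * (5*e+1))%nat with (2*e + (4*e+1) + (4*e+1))%nat by lia.
      rewrite !pow_add. ring. }
    rewrite Hexp1, Hexp2, Hexp3.
    assert (Py : 0 < t ^ (2*e)) by (apply pow_lt; lra).
    assert (P4 : 0 < 4 ^ j) by (apply pow_lt; lra).
    split; [|split; [|split; [|split; [|split]]]].
    + replace (ev2 G * (y * y + t * y + 1) * (ev2 H * (y * y + t' * y + 1)))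
        with ((ev2 G * ev2 H) * ((y * y + t * y + 1) * (y * y + t' * y + 1))) by ring.
      rewrite I1. apply fact5a.
    + replace (evs2 G * (y' * y' + t' * y' + 1) * (evs2 H * (y' * y' + t * y' + 1)))
        with ((evs2 G * evs2 H) * ((y' * y' + t' * y' + 1) * (y' * y' + t * y' + 1))) by ring.
      rewrite I2. apply fact5b.
    + assert (0 < y * y + t * y + 1) by nra.
      assert (y * y + t * y + 1 <= 4 * (y*y)) by nra.
      split; [nra|].
      apply Rle_trans with (4 ^ j * t ^ (2 * e) * (4 * (y*y))).
      * apply Rmult_le_compat; lra.
      * right; ring.
    + assert (0 < y * y + t' * y + 1) by nra.
      assert (y * y + t' * y + 1 <= 4 * (y*y)) by nra.
      split; [nra|].
      apply Rle_trans with (4 ^ j * t ^ (2 * e) * (4 * (y*y))).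
      * apply Rmult_le_compat; lra.
      * right; ring.
    + assert (Ha : Rabs (t' * y') <= - t') by (rewrite Rabs_mult, (Rabs_left t') by lra; nra).
      apply Rabs_le_between in Ha.
      assert (0 <= y' * y') by nra.
      assert (y' * y' <= 1) by (assert (y'*y' = Rabs y' * Rabs y') by (rewrite <- Rabs_mult; rewrite Rabs_right; nra); pose proof (Rabs_pos y'); nra).
      assert (0 < y' * y' + t' * y' + 1) by nra.
      assert (y' * y' + t' * y' + 1 <= 4) by nra.
      split; [nra|]. apply Rle_trans with (4 ^ j * 4); [apply Rmult_le_compat; lra| right; ring].
    + assert (Ha : Rabs (t * y') <= t) by (rewrite Rabs_mult, (Rabs_right t) by lra; nra).
      apply Rabs_le_between in Ha.
      assert (0 <= y' * y') by nra.
      assert (y' * y' <= 1) by (assert (y'*y' = Rabs y' * Rabs y') by (rewrite <- Rabs_mult; rewrite Rabs_right; nra); pose proof (Rabs_pos y'); nra).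
      assert (Rabs (y' * y' + t * y' + 1) <= 4) by (apply Rabs_le; nra).
      rewrite Rabs_mult.
      apply Rle_trans with (2 * 4 ^ j * 4); [apply Rmult_le_compat; try lra; apply Rabs_pos| right; ring].
Qed.

Lemma elt_pair a b c d : elt a b c d = (IZR a + IZR c * t, IZR b + IZR d * t).
Proof. rewrite elt_ev. reflexivity. Qed.
Lemma sigma_elt_pair a b c d : sigma_elt a b c d = (IZR a + IZR c * t', IZR b + IZR d * t').
Proof.
  unfold sigma_elt, tau_conj, Cplus, Cmult, Ci, RtoC; simpl. fold t'. f_equal; ring.
Qed.

Lemma m1_pow_sq e : (-1) ^ e * (-1) ^ e = 1.
Proof. rewrite <- Rpow_mult_distr. replace (-1 * -1) with 1 by ring. apply pow1. Qed.

Lemma det_formula_gen (g g' h h' A B tt tt' : R) :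
  g * h = A^4 * tt - 1 -> g' * h' = B^4 * tt' - 1 -> (A*B)*(A*B) = 1 -> tt * tt' = -1 ->
  - (g' * A) * (- (h' * (tt * A))) + tt * (- (h * (tt' * B))) * (g * B) = -2 * (B*B) /\
  (g' * A) * tt' * (- (h' * (tt * A))) + (- (h * (tt' * B))) * (g * B) = 2 * (B*B) * tt'.
Proof.
  intros H1 H2 H3 H4. split.
  - replace (- (g' * A) * (- (h' * (tt * A))) + tt * (- (h * (tt' * B))) * (g * B))
      with (tt*A*A*(g'*h') - (tt*tt')*B*B*(g*h)) by ring.
    rewrite H1, H2.
    replace (tt * A * A * (B ^ 4 * tt' - 1) - tt * tt' * B * B * (A ^ 4 * tt - 1))
      with ((tt*tt')*((A*B)*(A*B))*B*B - tt*A*A - (tt*tt')*tt*((A*B)*(A*B))*A*A + (tt*tt')*B*B) by ring.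
    rewrite H3, H4. ring.
  - replace ((g' * A) * tt' * (- (h' * (tt * A))) + (- (h * (tt' * B))) * (g * B))
      with (-(tt*tt')*A*A*(g'*h') - tt'*B*B*(g*h)) by ring.
    rewrite H1, H2.
    replace (- (tt * tt') * A * A * (B ^ 4 * tt' - 1) - tt' * B * B * (A ^ 4 * tt - 1))
      with (-(tt*tt')*((A*B)*(A*B))*B*B*tt' + (tt*tt')*A*A - (tt*tt')*((A*B)*(A*B))*A*A + tt'*B*B) by ring.
    rewrite H3, H4. ring.
Qed.

Lemma tfix a c : c + (a + c) * t = t * (a + c * t).
Proof. replace (t * (a + c * t)) with (a * t + c * (t * t)) by ring. rewrite t_sq. ring. Qed.
Lemma t'fix a c : c + (a + c) * t' = t' * (a + c * t').
Proof. replace (t' * (a + c * t')) with (a * t' + c * (t' * t')) by ring. rewrite t'_sq. ring. Qed.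

Lemma detX_pairs X X' W W' :
  detX (X, 0) (X', 0) (- W, t * W) (- W', t' * W') = (- X * W' + t * W * X', X * t' * W' + W * X').
Proof. unfold detX, Cminus, Cplus, Copp, Cmult, Ci; simpl. f_equal; ring. Qed.

Lemma construction j : exists r, Dset (20 * 4 ^ j * t ^ (ej j)) r /\ r <= 4 * (t' ^ (ej j) * t' ^ (ej j)).
Proof.
  pose proof t_bounds as Tb. pose proof t'_bounds as T'b. pose proof t_prod as Tp.
  destruct (GH_inv j) as [I1 [I2 [[I3 I3'] [[I4 I4'] [[I5 I5'] I6]]]]].
  set (e := ej j) in *. set (G := fst (GH j)) in *. set (H := snd (GH j)) in *.
  set (x1 := mul2 (sig2 G) (qpow tau2 e)).
  set (w := neg2 (mul2 H (qpow taup2 (S e)))).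
  assert (Ex1 : ev2 x1 = evs2 G * t ^ e) by (unfold x1; rewrite ev2_mul, ev2_sig, ev2_qpow, ev2_tau; reflexivity).
  assert (Ex1' : evs2 x1 = ev2 G * t' ^ e) by (unfold x1; rewrite evs2_mul, evs2_sig, evs2_qpow, evs2_tau; reflexivity).
  assert (Ew : ev2 w = - (ev2 H * (t' * t' ^ e))) by (unfold w; rewrite ev2_neg, ev2_mul, ev2_qpow, ev2_taup; reflexivity).
  assert (Ew' : evs2 w = - (evs2 H * (t * t ^ e))) by (unfold w; rewrite evs2_neg, evs2_mul, evs2_qpow, evs2_taup; reflexivity).
  assert (hA : 0 < t ^ e) by (apply pow_lt; lra).
  assert (hAB : t ^ e * Rabs (t' ^ e) = 1).
  { rewrite <- (Rabs_right (t ^ e)) at 1 by lra. rewrite <- Rabs_mult, <- Rpow_mult_distr, Tp. apply pow_1_abs. }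
  assert (hB : 0 < Rabs (t' ^ e)) by (apply Rabs_pos_lt; apply pow_nonzero; lra).
  assert (h2e : t ^ (2 * e) = t ^ e * t ^ e) by (replace (2*e)%nat with (e+e)%nat by lia; apply pow_add).
  rewrite h2e in I3', I4'.
  set (K := 4 ^ j * t ^ e).
  assert (P4 : 0 < 4 ^ j) by (apply pow_lt; lra).
  assert (Bx1 : Rabs (ev2 x1) + Rabs (evs2 x1) <= 2 * K).
  { rewrite Ex1, Ex1', !Rabs_mult, (Rabs_right (evs2 G)), (Rabs_right (ev2 G)), (Rabs_right (t ^ e)) by lra.
    unfold K.
    assert (evs2 G * t ^ e <= 4 ^ j * t ^ e) by (apply Rmult_le_compat_r; lra).
    assert (ev2 G * Rabs (t' ^ e) <= 4 ^ j * t ^ e * t ^ e * Rabs (t' ^ e)) by (apply Rmult_le_compat_r; lra).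
    assert (4 ^ j * t ^ e * t ^ e * Rabs (t' ^ e) = 4 ^ j * t ^ e) by (rewrite Rmult_assoc, hAB; ring).
    lra. }
  assert (Bw : Rabs (ev2 w) + Rabs (evs2 w) <= 5 * K).
  { rewrite Ew, Ew', !Rabs_Ropp, !Rabs_mult, (Rabs_right (ev2 H)), (Rabs_right t), (Rabs_right (t ^ e)) by lra.
    rewrite (Rabs_left t') by lra. unfold K.
    assert (ev2 H * (- t' * Rabs (t' ^ e)) <= 4 ^ j * t ^ e * t ^ e * (1 * Rabs (t' ^ e))).
    { apply Rmult_le_compat; try lra. - apply Rmult_le_pos; lra. - apply Rmult_le_compat_r; lra. }
    assert (4 ^ j * t ^ e * t ^ e * (1 * Rabs (t' ^ e)) = 4 ^ j * t ^ e) by (rewrite Rmult_1_l, Rmult_assoc, hAB; ring).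
    assert (Rabs (evs2 H) * (t * t ^ e) <= 2 * 4 ^ j * (2 * t ^ e)).
    { apply Rmult_le_compat; try lra. - apply Rabs_pos. - apply Rmult_le_pos; lra. - apply Rmult_le_compat_r; lra. }
    lra. }
  destruct (coords_bound x1) as [Ca1 Cc1]. destruct (coords_bound w) as [Caw Ccw].
  assert (Nj : 20 * 4 ^ j * t ^ e = 20 * K) by (unfold K; ring).
  rewrite Nj.
  assert (HK : 0 < K) by (unfold K; apply Rmult_lt_0_compat; lra).
  assert (Hx1pos : 0 < ev2 x1) by (rewrite Ex1; apply Rmult_lt_0_compat; lra).
  assert (Hwnz : ev2 w <> 0).
  { rewrite Ew. apply Ropp_neq_0_compat. apply Rmult_integral_contrapositive_currified; [lra|].
    apply Rmult_integral_contrapositive_currified; [lra|]. apply pow_nonzero; lra. }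
  assert (E1 : elt (pa x1) 0 (pc x1) 0 = (ev2 x1, 0)).
  { rewrite elt_pair. unfold ev2. f_equal. ring. }
  assert (E1' : sigma_elt (pa x1) 0 (pc x1) 0 = (evs2 x1, 0)).
  { rewrite sigma_elt_pair. unfold evs2. f_equal. ring. }
  assert (E2 : elt (- pa w) (pc w) (- pc w) (pa w + pc w) = (- ev2 w, t * ev2 w)).
  { rewrite elt_pair. unfold ev2. rewrite !opp_IZR, plus_IZR. f_equal; [ring| apply tfix]. }
  assert (E2' : sigma_elt (- pa w) (pc w) (- pc w) (pa w + pc w) = (- evs2 w, t' * evs2 w)).
  { rewrite sigma_elt_pair. unfold evs2. rewrite !opp_IZR, plus_IZR. f_equal; [ring| apply t'fix]. }
  eexists. split.
  - exists (pa x1), 0%Z, (pc x1), 0%Z, (- pa w)%Z, (pc w), (- pc w)%Z, (pa w + pc w)%Z.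
    split; [|split; [|split; [|split; [|reflexivity]]]].
    + unfold inbox. rewrite Rabs_R0. repeat split; lra.
    + unfold inbox. rewrite !opp_IZR, !Rabs_Ropp, plus_IZR.
      pose proof (Rabs_triang (IZR (pa w)) (IZR (pc w))).
      repeat split; lra.
    + rewrite E1. intro Hc. injection Hc as Hc1. lra.
    + rewrite E2. intro Hc. injection Hc as Hc1 Hc2. lra.
  - rewrite E1, E1', E2, E2', detX_pairs.
    rewrite Ex1, Ex1', Ew, Ew'.
    assert (Hg : ev2 G * ev2 H = (t ^ e) ^ 4 * t - 1).
    { rewrite I1, pow_add, pow_1, <- pow_mult, Nat.mul_comm. reflexivity. }
    assert (Hg' : evs2 G * evs2 H = (t' ^ e) ^ 4 * t' - 1).
    { rewrite I2, pow_add, pow_1, <- pow_mult, Nat.mul_comm. reflexivity. }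
    assert (HAB2 : (t ^ e * t' ^ e) * (t ^ e * t' ^ e) = 1).
    { rewrite <- Rpow_mult_distr, Tp. apply m1_pow_sq. }
    destruct (det_formula_gen _ _ _ _ _ _ t t' Hg Hg' HAB2 Tp) as [D1 D2].
    rewrite D1, D2.
    eapply Rle_trans; [apply Cmod_le_abs|].
    assert (0 <= t' ^ e * t' ^ e) by nra.
    set (BB := t' ^ e * t' ^ e) in *.
    assert (R1 : Rabs (-2 * BB) = 2 * BB) by (rewrite Rabs_left1 by nra; ring).
    assert (R2 : Rabs (2 * BB * t') = - 2 * BB * t') by (rewrite Rabs_left1 by nra; ring).
    rewrite R1, R2. nra.
Qed.

Lemma exists_nat_ge X : exists j : nat, X <= INR j.
Proof.
  destruct (Rle_or_lt X 0) as [H|H]; [exists O; simpl; lra|].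
  destruct (archimed X) as [H1 H2].
  exists (Z.to_nat (up X)). rewrite INR_IZR_INZ, Z2Nat.id; [lra|].
  apply le_IZR. lra.
Qed.

Lemma ln_pos_gt1 x : 1 < x -> 0 < ln x.
Proof. intro H. rewrite <- ln_1. apply ln_increasing; lra. Qed.

Lemma Dset_nonempty N : 1 <= N -> exists r, Dset N r.
Proof.
  intro HN. exists (Cmod (detX (elt 1 0 0 0) (sigma_elt 1 0 0 0) (elt 1 0 0 0) (sigma_elt 1 0 0 0))).
  exists 1%Z, 0%Z, 0%Z, 0%Z, 1%Z, 0%Z, 0%Z, 0%Z.
  assert (Hb : inbox N 1 0 0 0) by (unfold inbox; rewrite Rabs_R0, Rabs_R1; repeat split; lra).
  assert (He : elt 1 0 0 0 <> RtoC 0).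
  { rewrite elt_pair. intro Hc. injection Hc as Hc1. lra. }
  split; [exact Hb|split;[exact Hb|split;[exact He|split;[exact He|reflexivity]]]].
Qed.

Lemma DNN_bounds N : 1 <= N -> / (48 * (N * N)) <= DNN N /\ (forall r, Dset N r -> DNN N <= r).
Proof.
  intro HN. destruct (Glb_Rbar_correct (Dset N)) as [Hlb Hglb].
  destruct (Dset_nonempty N HN) as [r0 Hr0].
  assert (Hl : Rbar_le (Finite (/ (48 * (N * N)))) (Glb_Rbar (Dset N))).
  { apply Hglb. intros x Hx. simpl. apply lower_bound; [lra|exact Hx]. }
  assert (Hu := Hlb r0 Hr0).
  unfold DNN. destruct (Glb_Rbar (Dset N)) as [l| |]; simpl in *; try contradiction.
  split; [exact Hl|]. intros r Hr. exact (Hlb r Hr).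
Qed.

Definition fN (N : R) := - ln (DNN N) / ln N.

Lemma f_upper N : 2 <= N -> fN N <= 2 + ln 48 / ln N.
Proof.
  intro HN. destruct (DNN_bounds N) as [Hl _]; [lra|].
  assert (HNp : 0 < N * N) by nra.
  assert (Hd : 0 < / (48 * (N*N))) by (apply Rinv_0_lt_compat; nra).
  assert (HlnN : 0 < ln N) by (apply ln_pos_gt1; lra).
  assert (H1 : ln (/ (48 * (N * N))) <= ln (DNN N)) by (apply ln_le; lra).
  rewrite ln_Rinv, ln_mult, ln_mult in H1 by lra.
  unfold fN. unfold Rdiv.
  replace (2 + ln 48 * / ln N) with ((2 * ln N + ln 48) * / ln N) by (field; lra).
  apply Rmult_le_compat_r; [left; apply Rinv_0_lt_compat; lra|]. lra.
Qed.

Lemma ej_sq j : (j * j <= ej j)%nat.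
Proof. induction j; simpl; [lia|]. nia. Qed.

Lemma INR_le_pow4 j : INR j <= 4 ^ j.
Proof.
  induction j; [simpl; lra|]. rewrite S_INR. simpl pow.
  assert (1 <= 4 ^ j) by (apply pow_R1_Rle; lra). lra.
Qed.

Lemma f_lower_seq eps M : 0 < eps -> exists N, M <= N /\ 2 - eps <= fN N.
Proof.
  intro Heps. pose proof t_bounds as Tb. pose proof t'_bounds as T'b. pose proof t_prod as Tp.
  set (L := ln t). assert (HL : 0 < L) by (apply ln_pos_gt1; lra).
  set (a := ln 20). assert (Ha : 0 < a) by (apply ln_pos_gt1; lra).
  set (b := ln 4). assert (Hb : 0 < b) by (apply ln_pos_gt1; lra).
  set (c := 2 * a + b + 2 * b).
  destruct (exists_nat_ge (Rmax 1 (Rmax M (c / (eps * L))))) as [j Hj].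
  assert (Hj1 : 1 <= INR j) by (eapply Rle_trans; [apply Rmax_l|exact Hj]).
  assert (HjM : M <= INR j) by (eapply Rle_trans; [eapply Rle_trans; [apply Rmax_l|apply Rmax_r]|exact Hj]).
  assert (Hjc : c / (eps * L) <= INR j) by (eapply Rle_trans; [eapply Rle_trans; [apply Rmax_r|apply Rmax_r]|exact Hj]).
  set (e := ej j).
  exists (20 * 4 ^ j * t ^ e).
  assert (P4 : 1 <= 4 ^ j) by (apply pow_R1_Rle; lra).
  assert (PA : 1 <= t ^ e) by (apply pow_R1_Rle; lra).
  split.
  { pose proof (INR_le_pow4 j). nra. }
  destruct (construction j) as [r [Hr Hrb]]. fold e in Hr, Hrb.
  set (Nj := 20 * 4 ^ j * t ^ e) in *.
  assert (HNj : 1 <= Nj) by (unfold Nj; nra).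
  destruct (DNN_bounds Nj HNj) as [Hl Hle].
  assert (HD : 0 < DNN Nj) by (eapply Rlt_le_trans; [|exact Hl]; apply Rinv_0_lt_compat; nra).
  assert (HDle : DNN Nj <= 4 * (t' ^ e * t' ^ e)) by (eapply Rle_trans; [apply Hle; exact Hr|exact Hrb]).
  assert (HBB : t' ^ e * t' ^ e = / (t ^ e * t ^ e)).
  { assert (Hx : (t ^ e * t' ^ e) * (t ^ e * t' ^ e) = 1) by (rewrite <- Rpow_mult_distr, Tp; apply m1_pow_sq).
    assert (0 < t ^ e * t ^ e) by nra. field_simplify_eq; [|lra]. lra. }
  assert (HlnD : ln (DNN Nj) <= b - 2 * INR e * L).
  { eapply Rle_trans; [apply ln_le; [exact HD|exact HDle]|].
    rewrite HBB, ln_mult, ln_Rinv, ln_mult, ln_pow by (try apply Rinv_0_lt_compat; nra).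
    unfold b, L. lra. }
  assert (HlnN : ln Nj = a + INR j * b + INR e * L).
  { unfold Nj. rewrite ln_mult, ln_mult, ln_pow, ln_pow by (try apply pow_lt; lra). unfold a, b, L. ring. }
  assert (He : INR j * INR j <= INR e).
  { rewrite <- mult_INR. apply le_INR. apply ej_sq. }
  assert (HlnNp : 0 < ln Nj).
  { rewrite HlnN. pose proof (pos_INR e). nra. }
  unfold fN. fold Nj.
  apply Rmult_le_reg_r with (ln Nj); [exact HlnNp|].
  unfold Rdiv. rewrite Rmult_assoc, Rinv_l, Rmult_1_r by lra.
  rewrite HlnN.
  assert (Hc : c <= eps * L * INR j).
  { apply Rmult_le_reg_r with (/ (eps * L)); [apply Rinv_0_lt_compat; nra|].
    replace (eps * L * INR j * / (eps * L)) with (INR j) by (field; lra). exact Hjc. }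
  assert (Key : 2 * a + 2 * INR j * b + b <= eps * INR e * L).
  { assert (2 * a + 2 * INR j * b + b <= c * INR j) by (unfold c; nra).
    assert (c * INR j <= eps * L * INR j * INR j) by (apply Rmult_le_compat_r; lra).
    assert (eps * L * (INR j * INR j) <= eps * L * INR e) by (apply Rmult_le_compat_l; nra).
    nra. }
  pose proof (pos_INR e). pose proof (pos_INR j).
  assert (0 <= eps * (a + INR j * b)).
  { apply Rmult_le_pos; [lra|]. assert (0 <= INR j * b) by (apply Rmult_le_pos; lra). lra. }
  replace ((2 - eps) * (a + INR j * b + INR e * L))
    with (2 * a + 2 * INR j * b + 2 * INR e * L - eps * (a + INR j * b) - eps * INR e * L) by ring.
  lra.
Qed.

Lemma lub_ok E : Rbar_is_lub E (Rbar_lub E).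
Proof. unfold Rbar_lub. destruct (Rbar_ex_lub E) as [l Hl]. exact Hl. Qed.
Lemma glb_ok E : Rbar_is_glb E (Rbar_glb E).
Proof. unfold Rbar_glb. destruct (Rbar_ex_glb E) as [l Hl]. exact Hl. Qed.

Lemma sup_ge2 M : Rbar_le (Finite 2) (sup_from fN M).
Proof.
  unfold sup_from. destruct (lub_ok (fun y => exists N, M <= N /\ y = Finite (fN N))) as [Hub _].
  set (l := Rbar_lub _) in *. clearbody l.
  destruct l as [l| |]; simpl; auto.
  - destruct (Rle_or_lt 2 l) as [H|H]; [exact H|exfalso].
    destruct (f_lower_seq ((2 - l)/2) M) as [N [HN Hf]]; [lra|].
    assert (Hx := Hub (Finite (fN N)) (ex_intro _ N (conj HN eq_refl))). simpl in Hx. lra.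
  - destruct (f_lower_seq 1 M) as [N [HN Hf]]; [lra|].
    exact (Hub (Finite (fN N)) (ex_intro _ N (conj HN eq_refl))).
Qed.

Lemma sup_le M eps : 0 < eps -> Rmax 2 (exp (ln 48 / eps)) <= M -> Rbar_le (sup_from fN M) (Finite (2 + eps)).
Proof.
  intros He HM. unfold sup_from. destruct (lub_ok (fun y => exists N, M <= N /\ y = Finite (fN N))) as [_ Hl].
  apply Hl. intros x [N [HN Hx]]. subst x. change (fN N <= 2 + eps).
  assert (H2 : 2 <= N) by (apply Rle_trans with (Rmax 2 (exp (ln 48 / eps))); [apply Rmax_l| lra]).
  assert (H3 : exp (ln 48 / eps) <= N) by (apply Rle_trans with (Rmax 2 (exp (ln 48 / eps))); [apply Rmax_r| lra]).
  pose proof (f_upper N H2).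
  assert (HlnN : 0 < ln N) by (apply ln_pos_gt1; lra).
  assert (H48 : 0 < ln 48) by (apply ln_pos_gt1; lra).
  assert (Hln : ln 48 / eps <= ln N).
  { rewrite <- (ln_exp (ln 48 / eps)). apply ln_le; [apply exp_pos|exact H3]. }
  assert (ln 48 / ln N <= eps).
  { apply Rmult_le_reg_r with (ln N); [exact HlnN|]. unfold Rdiv. rewrite Rmult_assoc, Rinv_l, Rmult_1_r by lra.
    apply Rmult_le_reg_r with (/ eps); [apply Rinv_0_lt_compat; lra|].
    replace (eps * ln N * / eps) with (ln N) by (field; lra). exact Hln. }
  lra.
Qed.

Theorem corollary3p3 :
  limsup_infty (fun N => - ln (DNN N) / ln N) = Finite 2.
Proof.
  change (fun N => - ln (DNN N) / ln N) with fN.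
  unfold limsup_infty.
  destruct (glb_ok (fun z => exists M, z = sup_from fN M)) as [Hlb Hgl].
  assert (H2 : Rbar_le (Finite 2) (Rbar_glb (fun z => exists M, z = sup_from fN M))).
  { apply Hgl. intros z [M Hz]. subst z. apply sup_ge2. }
  assert (Heps : forall eps, 0 < eps -> Rbar_le (Rbar_glb (fun z => exists M, z = sup_from fN M)) (Finite (2 + eps))).
  { intros eps He. eapply Rbar_le_trans.
    - apply Hlb. exists (Rmax 2 (exp (ln 48 / eps))). reflexivity.
    - apply sup_le; [exact He| lra]. }
  set (L := Rbar_glb _) in *. clearbody L.
  destruct L as [l| |]; simpl in *.
  - f_equal. destruct (Rle_or_lt l 2) as [H|H]; [lra|].
    specialize (Heps ((l - 2)/2) ltac:(lra)). simpl in Heps. lra.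
  - specialize (Heps 1 ltac:(lra)). simpl in Heps. contradiction.
  - contradiction.
Qed.
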